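(* Let $X$ be a collectionwise normal, first countable, strongly homogeneous topological space with $\operatorname{ind} X=0$. Then $X$ is strongly discrete homogeneous.
   Context: A Hausdorff space is strongly homogeneous if all its nonempty clopen subspaces are homeomorphic to each other. A space $X$ is collectionwise normal if it is $T_1$ and for every discrete family $\{F_s\}_{s\in S}$ of closed subsets there is a discrete family $\{V_s\}_{s\in S}$ of open sets with $F_s\subseteq V_s$. $\operatorname{ind}$ is the small inductive dimension. A subset $D$ of $X$ is discrete if each point of $X$ has a neighbourhood containing at most one point of $D$. A Hausdorff space $X$ is strongly discrete homogeneous (sDH) if for any two discrete subsets $A,B$ and any bijection $f\colon A\to B$, $f$ extends to a homeomorphism of $X$ onto itself. *)

(* Defs.v *)
From HB Require Import structures.
From mathcomp Require Import all_boot all_order all_algebra.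
From mathcomp Require Import all_classical all_reals all_analysis.
Set Implicit Arguments. Unset Strict Implicit. Unset Printing Implicit Defensive.
Local Open Scope classical_set_scope.

Definition discrete_family {T : topologicalType} (S : Type) (F : S -> set T) :=
  forall x : T, exists N : set T, nbhs x N /\
    forall s t : S, N `&` F s !=set0 -> N `&` F t !=set0 -> s = t.

Definition collectionwise_normal (T : topologicalType) :=
  accessible_space T /\
  forall (S : Type) (F : S -> set T),
    (forall s, closed (F s)) -> discrete_family F ->
    exists V : S -> set T, (forall s, open (V s)) /\
      (forall s, F s `<=` V s) /\ discrete_family V.

Definition first_countable (T : topologicalType) :=
  forall x : T, exists B : nat -> set T,
    (forall n, nbhs x (B n)) /\
    (forall N, nbhs x N -> exists n, B n `<=` N).

(* ind T = 0: T is nonempty and every point has arbitrarily small open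
   neighbourhoods with empty boundary, i.e. clopen ones. *)
Definition ind_zero (T : topologicalType) :=
  (exists x : T, True) /\
  forall (x : T) (U : set T), open U -> U x ->
    exists V : set T, [/\ open V, closed V, V x & (V `<=` U)].

Definition homeomorphic_subspaces {T : topologicalType} (U V : set T) :=
  exists f g : T -> T,
    [/\ (forall x, U x -> V (f x)), (forall y, V y -> U (g y)),
        (forall x, U x -> g (f x) = x), (forall y, V y -> f (g y) = y)
      & ({within U, continuous f} /\ {within V, continuous g})].

Definition strongly_homogeneous (T : topologicalType) :=
  hausdorff_space T /\
  forall U V : set T, open U -> closed U -> U !=set0 ->
    open V -> closed V -> V !=set0 -> homeomorphic_subspaces U V.

Definition discrete_subset {T : topologicalType} (D : set T) :=
  forall x : T, exists N : set T, nbhs x N /\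
    forall a b, D a -> D b -> N a -> N b -> a = b.

Definition self_homeomorphism {T : topologicalType} (h : T -> T) :=
  exists g : T -> T, [/\ cancel h g, cancel g h, continuous h & continuous g].

Definition sDH (T : topologicalType) :=
  hausdorff_space T /\
  forall (A B : set T) (f : T -> T),
    discrete_subset A -> discrete_subset B -> set_bij A B f ->
    exists h : T -> T, self_homeomorphism h /\ (forall a, A a -> h a = f a).

(* Main.v *)
Require Import Defs.
From HB Require Import structures.
From mathcomp Require Import all_boot all_order all_algebra.
From mathcomp Require Import all_classical all_reals all_analysis.
Set Implicit Arguments. Unset Strict Implicit. Unset Printing Implicit Defensive.
Local Open Scope classical_set_scope.


Lemma cont_atP {T : topologicalType} (h : T -> T) x :
  (forall M, nbhs (h x) M -> nbhs x (h @^-1` M)) -> {for x, continuous h}.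
Proof. by move=> H M /H. Qed.

Lemma cont_eq_near {T : topologicalType} (h k : T -> T) x (O : set T) : nbhs x O -> (forall y, O y -> h y = k y) ->
  {for x, continuous k} -> {for x, continuous h}.
Proof.
move=> Ox hk kc; apply: cont_atP => M.
rewrite (hk x (nbhs_singleton Ox)) => /kc kM.
apply: filterS (filterI Ox kM) => y [Oy /= ky]; by rewrite hk.
Qed.

Lemma cont_within_open {T : topologicalType} (k : T -> T) x (O : set T) : open O -> O x -> {within O, continuous k} ->
  {for x, continuous k}.
Proof. move=> oO Ox; rewrite continuous_open_subspace // => /(_ x); apply; exact/mem_set. Qed.

Lemma cont_id {T : topologicalType} (x : T) : {for x, continuous (@id T)}.
Proof. by apply: cont_atP. Qed.

Lemma open_nbhs' {T : topologicalType} (x : T) (O : set T) : open O -> O x -> nbhs x O.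
Proof. by move=> oO Ox; apply: open_nbhs_nbhs. Qed.


Definition good_seq {T : topologicalType} (x : T) (U : nat -> set T) :=
  [/\ (forall n, open (U n) /\ closed (U n)), (forall n, U n x),
      (forall n, U n.+1 `<=` U n), (forall n, (U n `\` U n.+1) !=set0)
    & (forall N, nbhs x N -> exists n, U n `<=` N)].

Definition ring_ {T : Type} (U : nat -> set T) n := U n `\` U n.+1.

Lemma gs_mono {T : topologicalType} (x : T) U : good_seq x U ->
  forall n m, (n <= m)%N -> U m `<=` U n.
Proof.
case=> _ _ dec _ _ n m /subnKC <-; elim: (m - n)%N => [|k IH]; first by rewrite addn0.
by rewrite addnS; apply: subset_trans (dec _) IH.
Qed.

Lemma gs_ring_uniq {T : topologicalType} (x : T) U : good_seq x U ->
  forall n m y, ring_ U n y -> ring_ U m y -> n = m.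
Proof.
move=> gs n m y [Un Un1] [Um Um1].
case: (ltngtP n m) => [nm|mn|//].
- by exfalso; apply: Un1; apply: (gs_mono gs nm).
- by exfalso; apply: Um1; apply: (gs_mono gs mn).
Qed.

Lemma gs_ring_notx {T : topologicalType} (x : T) U : good_seq x U ->
  forall n, ~ ring_ U n x.
Proof. by case=> _ Ux _ _ _ n [_]; apply. Qed.

Lemma gs_ring_clopen {T : topologicalType} (x : T) U : good_seq x U ->
  forall n, open (ring_ U n) /\ closed (ring_ U n).
Proof.
case=> co _ _ _ _ n; case: (co n) => o0 c0; case: (co n.+1) => o1 c1.
split; [apply: openI => //; rewrite openC // | apply: closedI => //; rewrite closedC //].
Qed.

Lemma gs_ring_cover {T : topologicalType} (x : T) U :
  accessible_space T -> good_seq x U ->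
  forall y, U 0%N y -> y <> x -> exists2 n, ring_ U n y & (forall m, U m y -> (m <= n)%N).
Proof.
move=> acc gs y U0y yx.
case: (gs) => _ _ _ _ base.
have : nbhs x (~` [set y]).
  apply: open_nbhs'; first by rewrite openC; exact: accessible_closed_set1.
  by move=> /esym/yx.
move=> /base [m Um].
have nUm : ~ U m y by move=> /Um; apply.
clear Um; elim: m nUm => [//|m IH] nUm.
destruct (pselect (U m y)) as [Umy|nUmy]; last exact: IH.
exists m; first by split.
move=> k Uk; rewrite leqNgt; apply/negP => mk.
by apply: nUm; apply: (gs_mono gs mk).
Qed.

Fixpoint iter_seq {T : Type} (f : nat -> set T -> set T) (P : set T) n :=
  match n with 0 => P | m.+1 => f m (iter_seq f P m) end.

Definition zdim (T : topologicalType) := forall (x : T) (U : set T), open U -> U x ->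
    exists V : set T, [/\ open V, closed V, V x & (V `<=` U)].

Definition noiso (T : topologicalType) := forall (x : T) (U : set T), open U -> U x ->
    exists y, U y /\ y <> x.

Lemma gs_exists {T : topologicalType} : accessible_space T -> first_countable T ->
  zdim T -> noiso T ->
  forall (x : T) P, open P -> closed P -> P x -> exists U, U 0%N = P /\ good_seq x U.
Proof.
move=> acc fc zd ni x P oP cP Px.
have [B [Bn Bb]] := fc x.
have : forall nU : nat * set T, exists C : set T,
  (open nU.2 /\ closed nU.2 /\ nU.2 x) ->
  [/\ open C, closed C, C x, C `<=` nU.2 & C `<=` B nU.1 /\ exists y, nU.2 y /\ ~ C y].
  move=> [n U]; case: (pselect (open U /\ closed U /\ U x)); last first.
    by move=> nh; exists set0 => /nh.
  move=> [oU [cU Ux]] /=.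
  have [y [Uy yx]] := ni x U oU Ux.
  have oO : open (U `&` (B n)° `&` ~` [set y]).
    apply: openI; first by apply: openI => //; exact: open_interior.
    by rewrite openC; exact: accessible_closed_set1.
  have [|V [oV cV Vx VO]] := zd x _ oO.
    by split; [split=> //; exact: Bn | move=> /esym/yx].
  exists V => _; split => //.
  - by move=> z /VO [[]].
  - split; first by move=> z /VO [[_ /interior_subset]].
    by exists y; split => // /VO [_]; apply.
move=> /choice [f fP].
pose U := iter_seq (fun n V => f (n, V)) P.
have inv : forall n, open (U n) /\ closed (U n) /\ U n x.
  elim=> [|n [oU [cU Ux]]]; first by [].
  by have [] := fP (n, U n) (conj oU (conj cU Ux)).
exists U; split => //; split.
- by move=> n; have [? []] := inv n.
- by move=> n; have [? []] := inv n.
- by move=> n; have [] := fP (n, U n) (inv n).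
- move=> n; have [_ _ _ _ [_ [y [Uy nC]]]] := fP (n, U n) (inv n).
  by exists y.
- move=> N /Bb [n BN]; exists n.+1.
  have [_ _ _ _ [CB _]] := fP (n, U n) (inv n).
  by apply: subset_trans BN.
Qed.

Lemma gs_cont_at {T : topologicalType} (p q : T) U V (h : T -> T) :
  accessible_space T -> good_seq p U -> good_seq q V -> h p = q ->
  (forall k z, ring_ U k z -> ring_ V k (h z)) -> {for p, continuous h}.
Proof.
move=> acc gU gV hp hR; apply: cont_atP => M.
rewrite hp; case: (gV) => _ Vq _ _ Vb; case/Vb => n VM.
case: (gU) => Uco Up _ _ _.
apply: (@filterS _ _ _ (U n)); last first.
  by apply: open_nbhs'; [exact: (Uco n).1 | exact: Up].
move=> z Unz /=; apply: VM.
destruct (pselect (z = p)) as [->|zp]; first by rewrite hp.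
have U0z : U 0%N z by apply: (gs_mono gU (leq0n n)).
have [k Rk kmax] := gs_ring_cover acc gU U0z zp.
have [Vk _] := hR _ _ Rk.
by apply: (gs_mono gV (kmax _ Unz)).
Qed.

Definition shom (T : topologicalType) := forall U V : set T, open U -> closed U -> U !=set0 ->
    open V -> closed V -> V !=set0 -> homeomorphic_subspaces U V.

Lemma gs_ringP {T : topologicalType} (x : T) U P : good_seq x U -> U 0%N = P ->
  forall n z, ring_ U n z -> P z.
Proof. by move=> gs <- n z [Unz _]; apply: (gs_mono gs (leq0n n)). Qed.

Lemma swap_exists {T : topologicalType} : accessible_space T -> first_countable T ->
  zdim T -> noiso T -> shom T ->
  forall (P Q : set T) p q, open P -> closed P -> open Q -> closed Q ->
  (forall z, P z -> Q z -> False) -> P p -> Q q ->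
  exists h : T -> T, [/\ (forall x, h (h x) = x), continuous h, h p = q
     & (forall x, ~ P x -> ~ Q x -> h x = x)].
Proof.
move=> acc fc zd ni sh P Q p q oP cP oQ cQ PQ Pp Qq.
have [U [U0 gU]] := gs_exists acc fc zd ni oP cP Pp.
have [V [V0 gV]] := gs_exists acc fc zd ni oQ cQ Qq.
pose R := ring_ U; pose R' := ring_ V.
have : forall n, exists fg : (T -> T) * (T -> T),
  [/\ (forall x, R n x -> R' n (fg.1 x)), (forall y, R' n y -> R n (fg.2 y)),
      (forall x, R n x -> fg.2 (fg.1 x) = x), (forall y, R' n y -> fg.1 (fg.2 y) = y)
    & ({within R n, continuous fg.1} /\ {within R' n, continuous fg.2})].
  move=> n; have [oR cR] := gs_ring_clopen gU n; have [oR' cR'] := gs_ring_clopen gV n.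
  have [f [g [fR gR gf fg cfg]]] := sh _ _ oR cR (let: And5 _ _ _ ne _ := gU in ne n)
    oR' cR' (let: And5 _ _ _ ne _ := gV in ne n).
  by exists (f, g).
move=> /choice [phi phiP].
pose h z := if pselect (z = p) then q else if pselect (z = q) then p else
  if pselect (exists n, R n z) then (phi (xget 0%N (fun n => R n z))).1 z else
  if pselect (exists n, R' n z) then (phi (xget 0%N (fun n => R' n z))).2 z else z.
have RP := gs_ringP gU U0; have RQ := gs_ringP gV V0.
have qp : q <> p by move=> e; apply: (PQ p) => //; rewrite -e.
have hR : forall n z, R n z -> h z = (phi n).1 z.
  move=> n z Rz; rewrite /h.
  destruct (pselect (z = p)) as [e|?]; first by exfalso; move: Rz; rewrite e; exact: gs_ring_notx gU n.
  destruct (pselect (z = q)) as [e|?]; first by exfalso; apply: (PQ z); [exact: RP Rz | rewrite e].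
  destruct (pselect (exists n, R n z)) as [ex|nex]; last by exfalso; apply: nex; exists n.
  by rewrite (gs_ring_uniq gU (xgetPex 0%N ex) Rz).
have hR' : forall n z, R' n z -> h z = (phi n).2 z.
  move=> n z Rz; rewrite /h.
  destruct (pselect (z = p)) as [e|?]; first by exfalso; apply: (PQ z); [rewrite e | exact: RQ Rz].
  destruct (pselect (z = q)) as [e|?]; first by exfalso; move: Rz; rewrite e; exact: gs_ring_notx gV n.
  destruct (pselect (exists n, R n z)) as [[m Rm]|?]; first by exfalso; apply: (PQ z); [exact: RP Rm | exact: RQ Rz].
  destruct (pselect (exists n, R' n z)) as [ex|nex]; last by exfalso; apply: nex; exists n.
  by rewrite (gs_ring_uniq gV (xgetPex 0%N ex) Rz).
have hout : forall z, ~ P z -> ~ Q z -> h z = z.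
  move=> z nP nQ; rewrite /h.
  destruct (pselect (z = p)) as [e|?]; first by exfalso; apply: nP; rewrite e.
  destruct (pselect (z = q)) as [e|?]; first by exfalso; apply: nQ; rewrite e.
  destruct (pselect (exists n, R n z)) as [[m Rm]|?]; first by exfalso; apply: nP; exact: RP Rm.
  destruct (pselect (exists n, R' n z)) as [[m Rm]|?]; first by exfalso; apply: nQ; exact: RQ Rm.
  by [].
have hp : h p = q by rewrite /h; case: (pselect (p = p)).
have hq : h q = p.
  by rewrite /h; destruct (pselect (q = p)) as [e|?]; [exfalso; exact: qp | case: (pselect (q = q))].
have cover : forall z, z = p \/ z = q \/ (exists n, R n z) \/ (exists n, R' n z) \/ (~ P z /\ ~ Q z).
  move=> z; destruct (pselect (z = p)) as [|zp]; first by left.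
  destruct (pselect (z = q)) as [|zq]; first by right; left.
  destruct (pselect (P z)) as [Pz|nP].
    have [n Rn _] := gs_ring_cover acc gU (eq_ind_r (fun X => X z) Pz U0) zp.
    by right; right; left; exists n.
  destruct (pselect (Q z)) as [Qz|nQ].
    have [n Rn _] := gs_ring_cover acc gV (eq_ind_r (fun X => X z) Qz V0) zq.
    by right; right; right; left; exists n.
  by right; right; right; right.
have hRR : forall n z, R n z -> R' n (h z).
  by move=> n z Rz; rewrite (hR _ _ Rz); have [] := phiP n; move=> + _ _ _ _; apply.
have hRR' : forall n z, R' n z -> R n (h z).
  by move=> n z Rz; rewrite (hR' _ _ Rz); have [] := phiP n; move=> _ + _ _ _; apply.
exists h; split => //.
- move=> z; case: (cover z) => [->|[->|[[n Rz]|[[n Rz]|[nP nQ]]]]].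
  + by rewrite hp hq.
  + by rewrite hq hp.
  + rewrite (hR' _ _ (hRR _ _ Rz)) (hR _ _ Rz).
    by have [_ _ + _ _] := phiP n; apply.
  + rewrite (hR _ _ (hRR' _ _ Rz)) (hR' _ _ Rz).
    by have [_ _ _ + _] := phiP n; apply.
  + by rewrite !hout.
- move=> z; case: (cover z) => [->|[->|[[n Rz]|[[n Rz]|[nP nQ]]]]].
  + exact: (gs_cont_at acc gU gV hp hRR).
  + exact: (gs_cont_at acc gV gU hq hRR').
  + have [oR _] := gs_ring_clopen gU n.
    apply: (cont_eq_near (open_nbhs' oR Rz) (hR n)).
    by have [_ _ _ _ [c _]] := phiP n; apply: cont_within_open c.
  + have [oR _] := gs_ring_clopen gV n.
    apply: (cont_eq_near (open_nbhs' oR Rz) (hR' n)).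
    by have [_ _ _ _ [_ c]] := phiP n; apply: cont_within_open c.
  + have oO : open (~` P `&` ~` Q) by apply: openI; rewrite openC.
    apply: (@cont_eq_near _ h id z _ (open_nbhs' oO (conj nP nQ))); last exact: cont_id.
    by move=> y [] ? ?; rewrite hout.
Qed.

Definition loc_one {T : topologicalType} (I : Type) (S : I -> set T) :=
  forall x : T, exists N, nbhs x N /\
    forall i j, N `&` S i !=set0 -> N `&` S j !=set0 -> i = j.

Lemma glue {T : topologicalType} (I : Type) (S : I -> set T) (k : I -> T -> T) :
  loc_one S ->
  (forall i x, ~ S i x -> k i x = x) ->
  (forall i x, k i (k i x) = x) ->
  (forall i, continuous (k i)) ->
  exists h : T -> T, [/\ (forall x, h (h x) = x), continuous h
     & forall i x, S i x -> h x = k i x].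
Proof.
move=> lo kout kk kc.
pose h y := match pselect (exists i, S i y) with
  | left e => k (proj1_sig (cid e)) y | right _ => y end.
have uniq : forall i j y, S i y -> S j y -> i = j.
  move=> i j y Si Sj; have [N [Ny NS]] := lo y.
  by apply: NS; exists y; split => //; exact: nbhs_singleton Ny.
have hS : forall i y, S i y -> h y = k i y.
  move=> i y Si; rewrite /h; destruct (pselect (exists i, S i y)) as [e|ne].
    by case: (cid e) => j Sj /=; rewrite (uniq _ _ _ Sj Si).
  by exfalso; apply: ne; exists i.
have hN : forall y, (forall i, ~ S i y) -> h y = y.
  move=> y nS; rewrite /h; destruct (pselect (exists i, S i y)) as [[i Si]|ne] => //.
  by exfalso; exact: nS Si.
have kS : forall i y, S i y -> S i (k i y).
  move=> i y Si; case: (pselect (S i (k i y))) => [//|nS]; exfalso.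
  have := kout _ _ nS; rewrite kk => e; apply: nS; by rewrite -e.
exists h; split => //.
- move=> y; case: (pselect (exists i, S i y)) => [[i Si]|ne].
    by rewrite (hS _ _ Si) (hS _ _ (kS _ _ Si)) kk.
  have nS : forall i, ~ S i y by move=> i Si; apply: ne; exists i.
  by rewrite !hN.
- move=> x; have [N [Nx NS]] := lo x.
  case: (pselect (exists i, N `&` S i !=set0)) => [[i Ni]|ne].
    apply: (@cont_eq_near _ h (k i) x N Nx); last exact: kc.
    move=> y Ny; case: (pselect (exists j, S j y)) => [[j Sj]|nj].
      have ji : j = i by apply: NS => //; exists y.
      by rewrite (hS _ _ Sj) ji.
    have nS : forall j, ~ S j y by move=> j Sj; apply: nj; exists j.
    by rewrite hN // kout.
  apply: (@cont_eq_near _ h id x N Nx); last exact: cont_id.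
  move=> y Ny; rewrite hN // => i Si; apply: ne; exists i; by exists y.
Qed.

Lemma nbhs_notin {T : topologicalType} (x a : T) : accessible_space T -> a <> x ->
  nbhs x (~` [set a]).
Proof.
move=> acc ax; apply: open_nbhs'; first by rewrite openC; exact: accessible_closed_set1.
by move=> /= e; apply: ax; rewrite e.
Qed.

Lemma disc_pt {T : topologicalType} (A : set T) : accessible_space T ->
  discrete_subset A -> forall x, exists N, nbhs x N /\ forall a, A a -> N a -> a = x.
Proof.
move=> acc dA x; have [N [Nx NA]] := dA x.
case: (pselect (exists a, [/\ A a, N a & a <> x])) => [[a [Aa Na ax]]|ne].
  exists (N `&` ~` [set a]); split; first by apply: filterI => //; exact: nbhs_notin.
  by move=> a' Aa' [Na' na']; exfalso; apply: na'; exact: NA.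
exists N; split => // a Aa Na; apply: contrapT => ax; apply: ne; by exists a.
Qed.

Lemma trivial_case {T : topologicalType} : accessible_space T -> shom T ->
  forall (x : T) (U : set T), open U -> U x -> (forall y, U y -> y = x) ->
  forall y : T, y = x.
Proof.
move=> acc sh x U oU Ux Uy.
have eU : U = [set x] by apply/seteqP; split => [y /Uy|y ->].
have n1 : (setT : set T) !=set0 by exists x.
have n2 : U !=set0 by exists x.
have cU : closed U by rewrite eU; exact: accessible_closed_set1.
have [f [g [fU _ gf _ _]]] := sh setT U openT closedT n1 oU cU n2.
move=> y.
have := gf y I; have := fU y I; rewrite eU /= => ->.
move=> <-; have := gf x I; have := fU x I; rewrite eU /= => ->.
by move=> ->.
Qed.

Theorem mainTheorem6 (T : topologicalType) :
  collectionwise_normal T -> first_countable T ->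
  strongly_homogeneous T -> ind_zero T -> sDH T.
Proof.
move=> [acc cw] fc [hs sh] [_ zd].
split => // A B f dA dB [fAB finj fsurj].
case: (pselect (exists (x : T) (U : set T), [/\ open U, U x & forall y, U y -> y = x])).
  move=> [x [U [oU Ux Uy]]].
  have all := trivial_case acc sh oU Ux Uy.
  exists id; split.
    by exists id; split => // z; exact: cont_id.
  by move=> a _; rewrite (all (f a)); exact: all.
move=> niso.
have ni : noiso T.
  move=> x U oU Ux; apply: contrapT => nex; apply: niso; exists x, U; split => // y Uy.
  by apply: contrapT => yx; apply: nex; exists y.
pose D := A `|` B.
have dD : forall x, exists N, nbhs x N /\ forall d, D d -> N d -> d = x.
  move=> x; have [NA [NAx HA]] := disc_pt acc dA x; have [NB [NBx HB]] := disc_pt acc dB x.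
  exists (NA `&` NB); split; first exact: filterI.
  by move=> d [Ad|Bd] [NAd NBd]; [exact: HA | exact: HB].
pose F := fun s : T => [set y | y = s /\ D s].
have clF : forall s, closed (F s).
  move=> s; case: (pselect (D s)) => Ds.
    have -> : F s = [set s].
      by rewrite eqEsubset; split => y /=; [case | move=> ->].
    exact: accessible_closed_set1.
  have -> : F s = set0.
    by rewrite eqEsubset; split => y //=; case=> _.
  exact: closed0.
have dF : discrete_family F.
  move=> x; have [N [Nx HN]] := dD x; exists N; split => //.
  move=> s t [y [Ny [ys Ds]]] [z [Nz [zt Dt]]]; subst y z.
  by rewrite (HN _ Ds Ny) (HN _ Dt Nz).
have [V [oV [FV dV]]] := cw T F clF dF.
have : forall s, exists W : set T, D s -> [/\ open W, closed W, W s & W `<=` V s].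
  move=> s; case: (pselect (D s)) => [Ds|nD]; last by exists set0.
  have [W [oW cW Ws WV]] := zd s (V s) (oV s) (FV s s (conj erefl Ds)).
  by exists W.
move=> /choice [W WP].
have Wdisj : forall s t z, D s -> D t -> W s z -> W t z -> s = t.
  move=> s t z Ds Dt Ws Wt; have [N [Nz HN]] := dV z.
  have [_ _ _ WVs] := WP s Ds; have [_ _ _ WVt] := WP t Dt.
  by apply: HN; exists z; split => //; [exact: nbhs_singleton Nz | exact: WVs
    | exact: nbhs_singleton Nz | exact: WVt].
have : forall s, exists cQ : T * set T, D s ->
    [/\ open cQ.2, closed cQ.2, cQ.2 cQ.1, cQ.2 `<=` W s & ~ cQ.2 s].
  move=> s; case: (pselect (D s)) => [Ds|nD]; last by exists (s, set0).
  have [oW cW Ws _] := WP s Ds.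
  have [y [Wy ys]] := ni s (W s) oW Ws.
  have oO : open (W s `&` ~` [set s]).
    by apply: openI => //; rewrite openC; exact: accessible_closed_set1.
  have [Q [oQ cQ Qy QO]] := zd y _ oO (conj Wy ys).
  exists (y, Q) => _; split => //; first by move=> z /QO [].
  by move=> /QO [_]; apply.
move=> /choice [cQ cQP].
pose c s := (cQ s).1; pose Q s := (cQ s).2.
pose P s := W s `&` ~` Q s.
have Pcl : forall s, D s -> open (P s) /\ closed (P s).
  move=> s Ds; have [oW cW _ _] := WP s Ds; have [oQ cQ0 _ _ _] := cQP s Ds.
  split; [apply: openI => //; rewrite openC // | apply: closedI => //; rewrite closedC //].
have Qcl : forall s, D s -> open (Q s) /\ closed (Q s).
  by move=> s Ds; have [oQ cQ0 _ _ _] := cQP s Ds.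
have Ps : forall s, D s -> P s s.
  by move=> s Ds; have [_ _ Ws _] := WP s Ds; have [_ _ _ _ nQ] := cQP s Ds.
have Qc : forall s, D s -> Q s (c s).
  by move=> s Ds; have [_ _ Qc _ _] := cQP s Ds.
have PW : forall s, P s `<=` W s by move=> s z [].
have QW : forall s, D s -> Q s `<=` W s.
  by move=> s Ds; have [_ _ _ QW _] := cQP s Ds.
have WV : forall s, D s -> W s `<=` V s.
  by move=> s Ds; have [_ _ _ WV] := WP s Ds.
have PQ : forall s z, P s z -> Q s z -> False by move=> s z [_ nQ].
have pieces : forall x : T, exists N, nbhs x N /\
    (forall s t, N `&` V s !=set0 -> N `&` V t !=set0 -> s = t) /\
    (forall s t, D s -> D t -> N `&` P s !=set0 -> N `&` Q t !=set0 -> False).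
  move=> x; have [N [Nx HN]] := dV x.
  have HN' : forall N', N' `<=` N ->
      forall s t, N' `&` V s !=set0 -> N' `&` V t !=set0 -> s = t.
    move=> N' sN s t [y [N'y Vy]] [y' [N'y' Vy']].
    by apply: HN; [exists y; split => //; exact: sN | exists y'; split => //; exact: sN].
  case: (pselect (exists z, D z /\ Q z x)) => [[z [Dz Qzx]]|nQ].
    have [oQ _] := Qcl z Dz.
    exists (N `&` Q z); split; first by apply: filterI => //; exact: open_nbhs'.
    split; first by apply: HN' => y [].
    move=> s t Ds Dt [y [[Ny Qzy] Psy]] _.
    have sz : s = z by apply: (Wdisj s z y Ds Dz (PW _ _ Psy) (QW _ Dz _ Qzy)).
    by subst s; exact: PQ Psy Qzy.
  case: (pselect (exists z, D z /\ P z x)) => [[z [Dz Pzx]]|nP].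
    have [oP _] := Pcl z Dz.
    exists (N `&` P z); split; first by apply: filterI => //; exact: open_nbhs'.
    split; first by apply: HN' => y [].
    move=> s t Ds Dt _ [y [[Ny Pzy] Qty]].
    have tz : t = z by apply: (Wdisj t z y Dt Dz (QW _ Dt _ Qty) (PW _ _ Pzy)).
    by subst t; exact: PQ Pzy Qty.
  case: (pselect (exists z, D z /\ (N `&` W z) !=set0)) => [[z [Dz [w [Nw Wzw]]]]|nW].
    have [oW cW _ _] := WP z Dz.
    have nWx : ~ W z x.
      move=> Wzx; case: (pselect (Q z x)) => Qzx.
        by apply: nQ; exists z.
      by apply: nP; exists z; split => //; split.
    exists (N `&` ~` W z); split.
      by apply: filterI => //; apply: open_nbhs' => //; rewrite openC.
    split; first by apply: HN' => y [].
    move=> s t Ds Dt [y [[Ny nWy] Psy]] _.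
    have sz : s = z.
      apply: HN; first by exists y; split => //; apply: WV Ds _ (PW _ _ Psy).
      by exists w; split => //; apply: WV Dz _ Wzw.
    by subst s; apply: nWy; exact: PW Psy.
  exists N; split => //; split => // s t Ds Dt [y [Ny Psy]] _.
  by apply: nW; exists s; split => //; exists y; split => //; exact: PW Psy.
have DA : forall a, A a -> D a by move=> a Aa; left.
have DB : forall b, B b -> D b by move=> b Bb; right.
have DfA : forall a, A a -> D (f a) by move=> a Aa; right; exact: fAB.
pose S1 a := [set z | A a /\ (P a z \/ Q (f a) z)].
have : forall a, exists k : T -> T, [/\ (forall z, k (k z) = z), continuous k,
    (forall z, ~ S1 a z -> k z = z) & (A a -> k a = c (f a))].
  move=> a; case: (pselect (A a)) => [Aa|nA]; last first.
    by exists id; split => // z; exact: cont_id.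
  have [oP cP] := Pcl a (DA a Aa); have [oQ cQ0] := Qcl (f a) (DfA a Aa).
  have disj : forall z, P a z -> Q (f a) z -> False.
    move=> z Paz Qz.
    have e : a = f a by apply: (Wdisj a (f a) z (DA a Aa) (DfA a Aa) (PW _ _ Paz)
      (QW _ (DfA a Aa) _ Qz)).
    by rewrite -e in Qz; exact: PQ Paz Qz.
  have [k [kk kc ka kout]] := swap_exists acc fc zd ni sh oP cP oQ cQ0 disj
    (Ps a (DA a Aa)) (Qc (f a) (DfA a Aa)).
  exists k; split => // z nS; apply: kout => H; apply: nS; split => //; [left | right] => //.
move=> /choice [k1 k1P].
pose S2 b := [set z | B b /\ W b z].
have : forall b, exists k : T -> T, [/\ (forall z, k (k z) = z), continuous k,
    (forall z, ~ S2 b z -> k z = z) & (B b -> k (c b) = b)].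
  move=> b; case: (pselect (B b)) => [Bb|nB]; last first.
    by exists id; split => // z; exact: cont_id.
  have [oP cP] := Pcl b (DB b Bb); have [oQ cQ0] := Qcl b (DB b Bb).
  have disj : forall z, Q b z -> P b z -> False by move=> z Qz Pz; exact: PQ Pz Qz.
  have [k [kk kc ka kout]] := swap_exists acc fc zd ni sh oQ cQ0 oP cP disj
    (Qc b (DB b Bb)) (Ps b (DB b Bb)).
  exists k; split => // z nS; apply: kout => H; apply: nS; split => //.
    exact: QW (DB b Bb) _ H.
  exact: PW H.
move=> /choice [k2 k2P].
have lo1 : loc_one S1.
  move=> x; have [N [Nx [HV HPQ]]] := pieces x; exists N; split => //.
  move=> i j [y [Ny [Ai [Piy|Qiy]]]] [y' [Ny' [Aj [Pjy'|Qjy']]]].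
  - apply: HV; first by exists y; split => //; exact: WV (DA i Ai) _ (PW _ _ Piy).
    by exists y'; split => //; exact: WV (DA j Aj) _ (PW _ _ Pjy').
  - exfalso; apply: (HPQ i (f j) (DA i Ai) (DfA j Aj)); first by exists y.
    by exists y'.
  - exfalso; apply: (HPQ j (f i) (DA j Aj) (DfA i Ai)); first by exists y'.
    by exists y.
  - have e : f i = f j.
      apply: HV; first by exists y; split => //; exact: WV (DfA i Ai) _ (QW _ (DfA i Ai) _ Qiy).
      by exists y'; split => //; exact: WV (DfA j Aj) _ (QW _ (DfA j Aj) _ Qjy').
    by apply: finj => //; rewrite inE.
have lo2 : loc_one S2.
  move=> x; have [N [Nx HN]] := dV x; exists N; split => //.
  move=> i j [y [Ny [Bi Wiy]]] [y' [Ny' [Bj Wjy']]].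
  apply: HN; first by exists y; split => //; exact: WV (DB i Bi) _ Wiy.
  by exists y'; split => //; exact: WV (DB j Bj) _ Wjy'.
have [h1 [h1h1 c1 h1S]] := glue lo1 (fun a => (let: And4 _ _ o _ := k1P a in o))
  (fun a => (let: And4 o _ _ _ := k1P a in o)) (fun a => (let: And4 _ o _ _ := k1P a in o)).
have [h2 [h2h2 c2 h2S]] := glue lo2 (fun a => (let: And4 _ _ o _ := k2P a in o))
  (fun a => (let: And4 o _ _ _ := k2P a in o)) (fun a => (let: And4 _ o _ _ := k2P a in o)).
exists (h2 \o h1); split.
  exists (h1 \o h2); split.
  - by move=> z /=; rewrite h2h2 h1h1.
  - by move=> z /=; rewrite h1h1 h2h2.
  - by move=> z; apply: continuous_comp; [exact: c1 | exact: c2].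
  - by move=> z; apply: continuous_comp; [exact: c2 | exact: c1].
move=> a Aa /=.
have S1a : S1 a a by split => //; left; exact: Ps (DA a Aa).
rewrite (h1S _ _ S1a).
have [_ _ _ ka] := k1P a; rewrite (ka Aa).
have Bfa : B (f a) by exact: fAB.
have S2c : S2 (f a) (c (f a)) by split => //; exact: QW (DB _ Bfa) _ (Qc _ (DB _ Bfa)).
rewrite (h2S _ _ S2c).
by have [_ _ _ kb] := k2P (f a); rewrite (kb Bfa).
Qed.
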